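(* Assume (A1)–(A4). There is a constant $K$ independent of $N$ such that for every $1\le i\le N$, $$\mathbb E\Big[\sup_{0\le t\le T}\big|\beta^*(t,\bar x_i(t),\bar x^{(N)}(t))-\bar\beta_N(t,\bar x_i(t),\bar x^{(N)}(t))\big|^2\Big]\le\frac K{N^2},$$ where $\bar x_i$ is the optimal state of Problem (LP).
   Context: For each $N\ge1$: on a complete filtered probability space, $W^0,W_1,\dots,W_N$ are independent 1-d Brownian motions; filtration generated by them and an independent $\mathcal F_0$. Data (independent of $N$): $T>0$, real constants $A,B,Q,R,G,\sigma,\sigma_0$, $a,b,q,r,g:\mathbb R\to\mathbb R$; primes denote derivatives. (A1) $Q,R,G,\sigma\ge0$, $\sigma_0>0$, $R>0$; $a,b,q,r,g$ bounded $C^2$ with bounded first and second derivatives. (A2) $\xi_1,\dots,\xi_N$ i.i.d., $\mathcal F_0$-measurable, fixed common law with finite second moment. (A3) $\exists\varepsilon_0>0$: $|R+\tfrac12r''(v)+yb''(v)|\ge\varepsilon_0$ for all $v,y$. $\rho$: the $C^1$ function with bounded derivative with $R\rho(y)+\tfrac12r'(\rho(y))+(B+b'(\rho(y)))y=0$. $P\ge0$ solves $\dot P+2AP+Q-R^{-1}B^2P^2=0$, $P(T)=G$. (A4) $a'(v)P(t)\ge R^{-1}Bb'(v)P(t)^2$, $B^2+Bb'(v)\ge0$ for all $t,v$. $k(t,x,y):=\rho(P(t)x+y)$, $\tilde b(t,x,y):=b(k(t,x,y))$. For $\theta\ge0$, PDE $\mathcal L_\theta$: $\partial_tF+\partial_xF[Ax+a(x)+Bk(t,x,F)+\tilde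 b(t,x,F)]+P(t)[a(x)+R^{-1}B^2P(t)x+Bk(t,x,F)+\tilde b(t,x,F)+a'(x)x]+\tfrac12(\theta+\sigma_0^2)\partial_{xx}F+\tfrac12q'(x)+(A+a'(x))F=0$, $F(T,x)=\tfrac12g'(x)$. $\Phi$, resp. $\Psi_N$, is its unique $C^{1,2}$ solution with bounded first and second $x$-derivatives for $\theta=0$, resp. $\theta=\sigma^2/N$. Feedback maps: $\beta^*(t,x,y):=-R^{-1}BP(t)(x-y)+k(t,y,\Phi(t,y))$ and $\bar\beta_N(t,x,y):=-R^{-1}BP(t)(x-y)+k(t,y,\Psi_N(t,y))$. Optimal states of Problem (LP): $\bar x_i$ solve $d\bar x_i=\{A\bar x_i+a(\bar x^{(N)})+B\bar\beta_N(t,\bar x_i,\bar x^{(N)})+b(k(t,\bar x^{(N)},\Psi_N(t,\bar x^{(N)})))\}dt+\sigma dW_i+\sigma_0dW^0$, $\bar x_i(0)=\xi_i$, with $\bar x^{(N)}=\frac1N\sum_i\bar x_i$ (the optimal controls are $\bar u_i=\bar\beta_N(t,\bar x_i,\bar x^{(N)})$). *)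

(* Defs.v *)
From HB Require Import structures.
From mathcomp Require Import all_boot all_order all_algebra.
From mathcomp Require Import all_classical all_reals all_analysis.
Set Implicit Arguments. Unset Strict Implicit. Unset Printing Implicit Defensive.
Import Order.TTheory GRing.Theory Num.Theory.
Import numFieldNormedType.Exports.
Local Open Scope classical_set_scope.
Local Open Scope ring_scope.

Record lq_data (R : realType) := LQData {
  hT : R; cA : R; cB : R; cQ : R; cR : R; cG : R; sig : R; sig0 : R;
  fa : R -> R; fb : R -> R; fq : R -> R; fr : R -> R; fg : R -> R }.

Section defs.
Variable R : realType.
Implicit Types (D : lq_data R) (f : R -> R).

Definition bounded_fun f := exists M : R, forall x, `|f x| <= M.

Definition bdd_C2 f :=
  (forall x, derivable f x 1) /\
  (forall x, derivable (derive1 f) x 1) /\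
  continuous (derive1 (derive1 f)) /\
  bounded_fun f /\ bounded_fun (derive1 f) /\ bounded_fun (derive1 (derive1 f)).

Definition hypA1 D :=
  0 < hT D /\
  0 <= cQ D /\ 0 <= cR D /\ 0 <= cG D /\ 0 <= sig D /\ 0 < sig0 D /\ 0 < cR D /\
  bdd_C2 (fa D) /\ bdd_C2 (fb D) /\ bdd_C2 (fq D) /\ bdd_C2 (fr D) /\ bdd_C2 (fg D).

Definition hypA3 D :=
  exists2 eps : R, 0 < eps & forall v y : R,
    eps <= `| cR D + 2^-1 * derive1 (derive1 (fr D)) v
               + y * derive1 (derive1 (fb D)) v |.

Definition is_rho D (rho : R -> R) :=
  [/\ forall y, derivable rho y 1,
      continuous (derive1 rho),
      bounded_fun (derive1 rho) &
      forall y, cR D * rho y + 2^-1 * derive1 (fr D) (rho y)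
                + (cB D + derive1 (fb D) (rho y)) * y = 0].

Definition is_riccati D (P : R -> R) :=
  [/\ {within `[0, hT D], continuous P},
      forall t, 0 < t < hT D -> derivable P t 1 /\
        derive1 P t + 2 * cA D * P t + cQ D
        - (cR D)^-1 * (cB D) ^+ 2 * (P t) ^+ 2 = 0,
      forall t, 0 <= t <= hT D -> 0 <= P t &
      P (hT D) = cG D].

Definition hypA4 D (P : R -> R) :=
  forall t v, 0 <= t <= hT D ->
    derive1 (fa D) v * P t >= (cR D)^-1 * cB D * derive1 (fb D) v * (P t) ^+ 2
    /\ (cB D) ^+ 2 + cB D * derive1 (fb D) v >= 0.

Definition kfun (P rho : R -> R) (t x y : R) := rho (P t * x + y).
Definition btilde D (P rho : R -> R) (t x y : R) := fb D (kfun P rho t x y).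

Definition pdt (F : R -> R -> R) t x := derive1 (fun s => F s x) t.
Definition pdx (F : R -> R -> R) t x := derive1 (F t) x.
Definition pdxx (F : R -> R -> R) t x := derive1 (fun z => derive1 (F t) z) x.

Definition strip D : set (R * R) := [set p | 0 <= p.1 <= hT D].
Definition ostrip D : set (R * R) := [set p | 0 < p.1 < hT D].

Definition pde_sol D (P rho : R -> R) (theta : R) (F : R -> R -> R) :=
  (forall t x, 0 <= t <= hT D ->
        derivable (F t) x 1 /\ derivable (fun z => pdx F t z) x 1) /\
  (forall t x, 0 < t < hT D -> derivable (fun s => F s x) t 1) /\
  {within strip D, continuous (fun p => F p.1 p.2)} /\
  {within strip D, continuous (fun p => pdx F p.1 p.2)} /\
  {within strip D, continuous (fun p => pdxx F p.1 p.2)} /\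
  {within ostrip D, continuous (fun p => pdt F p.1 p.2)} /\
  (exists M : R, forall t x, 0 <= t <= hT D ->
        `|pdx F t x| <= M /\ `|pdxx F t x| <= M) /\
  (forall t x, 0 < t < hT D ->
        pdt F t x
        + pdx F t x * (cA D * x + fa D x + cB D * kfun P rho t x (F t x)
                       + btilde D P rho t x (F t x))
        + P t * (fa D x + (cR D)^-1 * (cB D) ^+ 2 * P t * x
                 + cB D * kfun P rho t x (F t x) + btilde D P rho t x (F t x)
                 + derive1 (fa D) x * x)
        + 2^-1 * (theta + (sig0 D) ^+ 2) * pdxx F t x
        + 2^-1 * derive1 (fq D) x + (cA D + derive1 (fa D) x) * F t x = 0) /\
  (forall x, F (hT D) x = 2^-1 * derive1 (fg D) x).

(* feedback map: -R^{-1} B P(t) (x - y) + k(t, y, F(t,y)) ;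
   beta^* uses F = Phi, bar beta_N uses F = Psi_N *)
Definition feedback D (P rho : R -> R) (F : R -> R -> R) (t x y : R) :=
  - ((cR D)^-1 * cB D * P t * (x - y)) + kfun P rho t y (F t y).

Section prob.
Context {d : measure_display} {Omega : measurableType d}.
Variable Pr : probability Omega R.

Definition sigma_rv (X : Omega -> R) : set (set Omega) :=
  [set X @^-1` B | B in (@measurable _ R)].

Definition sigma_proc (T : R) (X : R -> Omega -> R) : set (set Omega) :=
  <<s \bigcup_(t in `[0, T]) sigma_rv (X t) >>.

Definition indep_family (I : eqType) (G : I -> set (set Omega)) :=
  forall (s : seq I) (E : I -> set Omega), uniq s ->
    (forall i, i \in s -> G i (E i)) ->
    Pr (\big[setI/setT]_(i <- s) E i) = (\prod_(i <- s) Pr (E i))%E.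

Definition is_BM (T : R) (W : R -> Omega -> R) :=
  [/\ forall t, 0 <= t <= T -> measurable_fun setT (W t),
      {ae Pr, forall w, W 0 w = 0},
      {ae Pr, forall w, {within `[0, T], continuous (fun t => W t w)}},
      forall s t (B : set R), 0 <= s -> s < t -> t <= T -> measurable B ->
        Pr ((fun w => W t w - W s w) @^-1` B) = normal_prob 0 (Num.sqrt (t - s)) B &
      forall (n : nat) (ts : nat -> R), 0 <= ts 0%N ->
        (forall k, (k < n)%N -> ts k <= ts k.+1) -> ts n <= T ->
        indep_family (fun k : 'I_n => sigma_rv (fun w => W (ts k.+1) w - W (ts k) w))].
End prob.

Definition sup_on (T : R) (f : R -> R) : \bar R :=
  ereal_sup [set (f t)%:E | t in `[0, T]].

Definition emp_mean (N : nat) (x : 'I_N -> R -> R) (t : R) : R :=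
  N%:R^-1 * \sum_(j < N) x j t.

Definition lp_drift D (P rho : R -> R) (Psi : R -> R -> R) (N : nat)
    (x : 'I_N -> R -> R) (i : 'I_N) (s : R) : R :=
  let m := emp_mean x s in
  cA D * x i s + fa D m + cB D * feedback D P rho Psi s (x i s) m
  + fb D (kfun P rho s m (Psi s m)).

Section lp.
Context {d : measure_display} {Omega : measurableType d}.
Variable Pr : probability Omega R.

Definition lp_indep (T : R) (N : nat) (xi : 'I_N -> Omega -> R)
    (W0 : R -> Omega -> R) (W : 'I_N -> R -> Omega -> R) :=
  indep_family Pr (fun k : ('I_N + option 'I_N)%type =>
    match k with
    | inl i => sigma_rv (xi i)
    | inr None => sigma_proc T W0
    | inr (Some i) => sigma_proc T (W i)
    end).

(* xbar is (a.s.) a continuous solution on [0,T] of the state equations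
   d xbar_i = drift_i dt + sigma dW_i + sigma_0 dW^0, xbar_i(0) = xi_i,
   written in integral form (the noise is additive) *)
Definition drift_int D (P rho : R -> R) (Psi : R -> R -> R) (N : nat)
    (x : 'I_N -> R -> R) (i : 'I_N) (t : R) : R :=
  \int[lebesgue_measure]_(s in `[0, t]) lp_drift D P rho Psi x i s.

Definition solves_LP D (P rho : R -> R) (Psi : R -> R -> R) (N : nat)
    (xi : 'I_N -> Omega -> R) (W0 : R -> Omega -> R) (W : 'I_N -> R -> Omega -> R)
    (xbar : 'I_N -> R -> Omega -> R) : Prop :=
  {ae Pr, forall w, forall i : 'I_N,
     {within `[0, hT D], continuous (fun t => xbar i t w)} /\
     (forall t, 0 <= t <= hT D ->
       xbar i t w = xi i w + drift_int D P rho Psi (fun j u => xbar j u w) i t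
         + sig D * W i t w + sig0 D * W0 t w)}.
End lp.

End defs.

(* Main.v *)
Require Import Defs.
From HB Require Import structures.
From mathcomp Require Import all_boot all_order all_algebra.
From mathcomp Require Import all_classical all_reals all_analysis.
From mathcomp Require Import lra ring.
Set Implicit Arguments. Unset Strict Implicit. Unset Printing Implicit Defensive.
Import Order.TTheory GRing.Theory Num.Theory.
Import numFieldNormedType.Exports.
Local Open Scope classical_set_scope.
Local Open Scope ring_scope.

Import HBNNSimple.
Lemma int_le_cst (R : realType) d (Omega : measurableType d) (Pr : probability Omega R)
  (f : Omega -> \bar R) (c : R) : 0 <= c -> (forall w, (0 <= f w <= c%:E)%E) ->
  (\int[Pr]_w f w <= c%:E)%E.
Proof.
move=> c0 fb.
rewrite ge0_integralTE; last by move=> w; case/andP: (fb w).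
apply/ge_ereal_sup => _ [h /= hle <-].
have := @le_sintegral _ _ R Pr h (cst_nnsfun Omega (NngNum c0)).
move=> /(_ _) H; apply: le_trans (H _) _.
  by move=> x /=; rewrite -lee_fin; apply: le_trans (hle x) _; case/andP: (fb x).
have := @sintegral_EFin_cst _ Omega R Pr setT (NngNum c0).
rewrite patch_setT /= => ->; by rewrite probability_setT mule1.
Qed.
Lemma dq_pos (R : realType) (f : R -> R) x : derivable f x 1 -> 0 < derive1 f x ->
  exists2 e, 0 < e & forall h, 0 < h < e -> f x < f (x + h).
Proof.
move=> df dpos.
have cv : (fun h => h^-1 *: ((f \o shift x) (h *: 1) - f x)) @ 0^' --> derive1 f x.
  by rewrite derive1E; exact: df.
have := cvgr_gt _ cv _ dpos.
move=> [e /= e0 He]; exists e => // h /andP[h0 he].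
have := He h; rewrite /ball /= sub0r normrN gtr0_norm // => /(_ he (lt0r_neq0 h0)).
rewrite /= [_%:A]mulr1 /GRing.scale /= => H.
by move: H; rewrite pmulr_rgt0 ?invr_gt0 // subr_gt0 addrC.
Qed.

Lemma dq_nonpos (R : realType) (f : R -> R) x e : derivable f x 1 -> 0 < e ->
  (forall h, 0 < h < e -> f (x + h) <= f x) -> derive1 f x <= 0.
Proof.
move=> df e0 H; rewrite leNgt; apply/negP => /(dq_pos df) [e' e'0 H'].
pose h := Num.min e e' / 2.
have h0 : 0 < h by rewrite divr_gt0 // lt_min e0 e'0.
have hlt : forall a, 0 < a -> Num.min e e' <= a -> h < a.
  move=> a a0 ma; apply: lt_le_trans ma; rewrite /h ltr_pdivrMr // mulr2n mulrDr mulr1 ltrDl.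
  by rewrite lt_min e0.
have := H h; have := H' h.
rewrite h0 hlt ?ge_min ?lexx ?orbT // hlt ?ge_min ?lexx //=.
by move=> a b; move: (b isT) (a isT); rewrite leNgt => /negP.
Qed.

Lemma max_d2 (R : realType) (f : R -> R) x :
  (forall y, derivable f y 1) -> (forall y, derivable (derive1 f) y 1) ->
  (forall y, f y <= f x) -> derive1 f x = 0 /\ derive1 (derive1 f) x <= 0.
Proof.
move=> d1 d2 fmax.
have f'0 : derive1 f x = 0.
  have := @derive1_at_max R f (x - 1) (x + 1) x.
  rewrite derive1E => /(_ _ _ _ _) H; apply: (@derive_val _ _ _ _ _ _ _ (H _ _ _ _)).
  - lra.
  - by move=> t _; exact: d1.
  - by rewrite in_itv /=; apply/andP; split; lra.
  - by move=> t _; exact: fmax.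
split => //.
rewrite leNgt; apply/negP => /(dq_pos (d2 x)) [e e0 He].
have e20 : 0 < e / 2 by rewrite divr_gt0.
have xlt : x < x + e / 2 by lra.
have hd : forall y, y \in `]x, x + e / 2[ -> is_derive y 1 f (derive1 f y).
  by move=> y _; rewrite derive1E; apply/derivableP/d1.
have hc : {within `[x, x + e / 2], continuous f}.
  by apply: derivable_within_continuous => y _; exact: d1.
have [c] := @MVT R f (derive1 f) x (x + e / 2) xlt hd hc.
rewrite in_itv /= => /andP[c1 c2] Heq.
have := He (c - x); rewrite subr_gt0 c1 /= f'0.
have -> : x + (c - x) = c by ring.
have -> : c - x < e by lra.
move=> /(_ isT) dpos.
have := fmax (x + e / 2); rewrite -subr_le0 Heq.
by rewrite leNgt => /negP; apply; apply: mulr_gt0 => //; lra.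
Qed.

Lemma lipf (R : realType) (f : R -> R) M :
  (forall y, derivable f y 1) -> (forall y, `|derive1 f y| <= M) ->
  forall x y, `|f y - f x| <= M * `|y - x|.
Proof.
move=> d1 bM.
have key : forall x y, x < y -> `|f y - f x| <= M * `|y - x|.
  move=> x y xy.
  have hd : forall z, z \in `]x, y[ -> is_derive z 1 f (derive1 f z).
    by move=> z _; rewrite derive1E; apply/derivableP/d1.
  have hc : {within `[x, y], continuous f}.
    by apply: derivable_within_continuous => z _; exact: d1.
  have [c _ ->] := @MVT R f (derive1 f) x y xy hd hc.
  by rewrite normrM; apply: ler_wpM2r => //.
move=> x y; case: (ltgtP x y) => [xy|yx|->]; first exact: key.
  by rewrite distrC (distrC y); exact: key.
by rewrite !subrr normr0 mulr0.
Qed.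
Lemma slice_cont (R : realType) (S : set (R * R)) (F : R -> R -> R) (A : set R) x :
  (forall t, A t -> S (t, x)) ->
  {within S, continuous (fun p => F p.1 p.2)} -> {within A, continuous (fun t => F t x)}.
Proof.
move=> AS /subspace_continuousP cF; apply/subspace_continuousP => t At W /=.
move=> /(cF (t, x) (AS t At)) /=.
rewrite /within /= nbhs_simpl /= => -[[U V] /= [Ut Vx] UV].
apply: filterS Ut => s Us As; apply: (UV (s, x)) => //=.
  by split => //; exact: nbhs_singleton.
exact: AS.
Qed.
Lemma dx_g (R : realType) (f : R -> R) (y df E C D : R) : is_derive y 1 f df ->
  is_derive y 1 (fun z => E * f z - C - D * (1 + z ^+ 2)) (E * df - D * (2 * y)).
Proof.
move=> hf.
have -> : (fun z => E * f z - C - D * (1 + z ^+ 2)) =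
   (cst E * f) - cst C - cst D * (cst 1 + (@id R) ^+ 2).
  by apply/funext => z.
apply: is_derive_eq.
rewrite /= /GRing.scale /=.
ring.
Qed.

Lemma dt_z (R : realType) (f : R -> R) (s df b F0 T D k : R) : is_derive s 1 f df ->
  is_derive s 1 (fun r => expR (b * r) * f r - F0 * (T - r) - D * expR (k * (T - r)))
    (b * expR (b * s) * f s + expR (b * s) * df + F0 + D * k * expR (k * (T - s))).
Proof.
move=> hf.
have -> : (fun r => expR (b * r) * f r - F0 * (T - r) - D * expR (k * (T - r))) =
   ((expR \o (cst b * id)) * f) - cst F0 * (cst T - id) - cst D * (expR \o (cst k * (cst T - id))).
  by apply/funext => z.
apply: is_derive_eq.
rewrite /= /GRing.scale /=.
ring.
Qed.
Lemma zcont (R : realType) (K S : set (R * R)) (u : R -> R -> R) (b F0 T e k : R) :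
  K `<=` S -> {within S, continuous (fun p => u p.1 p.2)} ->
  {within K, continuous (fun p => expR (b * p.1) * u p.1 p.2 - F0 * (T - p.1)
      - e * (1 + p.2 ^+ 2) * expR (k * (T - p.1)))}.
Proof.
move=> KS /(continuous_subspaceW KS) /subspace_continuousP cu.
apply/subspace_continuousP => p Kp.
have c1 : (fun q : R * R => q.1) @ within K (nbhs p) --> p.1.
  apply: cvg_within_filter; exact: cvg_fst.
have c2 : (fun q : R * R => q.2) @ within K (nbhs p) --> p.2.
  apply: cvg_within_filter; exact: cvg_snd.
apply: cvgB; [apply: cvgB|].
- apply: cvgM; last exact: (cu p Kp).
  have cb : (fun q : R * R => b * q.1) @ within K (nbhs p) --> b * p.1.
    exact: cvgM (cvg_cst b) c1.
  exact: (@cvg_comp _ _ _ _ expR _ _ _ cb (@continuous_expR R _)).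
- apply: cvgM; first exact: cvg_cst.
  apply: cvgB; [exact: cvg_cst | exact: c1].
- apply: cvgM.
    apply: cvgM; first exact: cvg_cst.
    apply: cvgD; first exact: cvg_cst.
    by rewrite expr2; apply: cvgM; exact: c2.
  have cb : (fun q : R * R => k * (T - q.1)) @ within K (nbhs p) --> k * (T - p.1).
    exact: cvgM (cvg_cst k) (cvgB (cvg_cst T) c1).
  exact: (@cvg_comp _ _ _ _ expR _ _ _ cb (@continuous_expR R _)).
Qed.


Lemma dx_g2 (R : realType) (f : R -> R) (y df E D : R) : is_derive y 1 f df ->
  is_derive y 1 (fun z => E * f z - D * (2 * z)) (E * df - D * 2).
Proof.
move=> hf.
have -> : (fun z => E * f z - D * (2 * z)) = (cst E * f) - cst D * (cst 2 * (@id R)).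
  by apply/funext => z.
apply: is_derive_eq.
rewrite /= /GRing.scale /=.
ring.
Qed.

Lemma cl0 (R : realType) (T C : R) (g : R -> R) : 0 < T -> {within `[0, T], continuous g} ->
  (forall t, 0 < t <= T -> g t <= C) -> g 0 <= C.
Proof.
move=> T0 /subspace_continuousP cg gC; rewrite leNgt; apply/negP => Cg.
have h0 : [set` `[0, T]] 0 by rewrite /= in_itv /= lexx ltW.
have := cvgr_gt _ (cg 0 h0) _ Cg.
move=> [e /= e0 He].
set m := Num.min e T.
have m1 : m <= e by rewrite /m ge_min lexx.
have m2 : m <= T by rewrite /m ge_min lexx orbT.
have m0 : 0 < m by rewrite /m lt_min e0 T0.
have := He (m / 2); rewrite /ball /= sub0r normrN.
have -> : `|m / 2| = m / 2 by apply: gtr0_norm; lra.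
have -> : m / 2 < e by lra.
rewrite in_itv /=.
have -> : 0 <= m / 2 <= T by apply/andP; split; lra.
move=> /(_ isT isT); rewrite ltNge => /negP; apply; apply: gC; apply/andP; split; lra.
Qed.

Lemma maxp (R : realType) (T : R) (u b : R -> R -> R) (a c0 f0 K1 B0 : R) :
  0 < T -> 0 <= a -> 0 <= c0 -> 0 <= f0 -> 0 <= K1 -> 0 <= B0 ->
  (forall t x, 0 <= t <= T -> derivable (u t) x 1 /\ derivable (fun z => pdx u t z) x 1) ->
  (forall t x, 0 < t < T -> derivable (fun s => u s x) t 1) ->
  {within [set p : R * R | 0 <= p.1 <= T], continuous (fun p => u p.1 p.2)} ->
  (forall t x, 0 <= t <= T -> u t x <= K1 * (1 + `|x|)) ->
  (forall t x, 0 < t < T -> `|b t x| <= B0 * (1 + `|x|)) ->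
  (forall x, u T x <= 0) ->
  (forall t x, 0 < t < T ->
     - c0 * `|u t x| - f0 <= pdt u t x + b t x * pdx u t x + a * pdxx u t x) ->
  forall t x, 0 <= t <= T -> u t x <= T * (expR ((c0 + 1) * T) * f0).
Proof.
move=> T0 a0 c00 f00 K10 B00 dx dt cu ug bg uT pde.
set be := c0 + 1. set F0 := expR (be * T) * f0. set ka := 4 * B0 + 2 * a + 1.
have F00 : 0 <= F0 by rewrite mulr_ge0 ?expR_ge0.
have be0 : 0 < be by rewrite /be; lra.
have expge1 : forall y : R, 0 <= y -> 1 <= expR y.
  by move=> y y0; have := expR_ge1Dx y; lra.
have stepA : forall t1 x0 e : R, 0 < t1 <= T -> 0 < e ->
   expR (be * t1) * u t1 x0 - F0 * (T - t1)
     - e * (1 + x0 ^+ 2) * expR (ka * (T - t1)) <= 0.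
  move=> t1 x0 e /andP[t10 t1T] e0.
  pose z (t x : R) := expR (be * t) * u t x - F0 * (T - t)
     - e * (1 + x ^+ 2) * expR (ka * (T - t)).
  rewrite leNgt; apply/negP => zpos.
  have {zpos} : 0 < z t1 x0 by [].
  move=> zpos.
  pose E := expR (be * T) * K1.
  have E0 : 0 <= E by rewrite mulr_ge0 ?expR_ge0.
  pose X := 1 + 2 * E / e.
  have X1 : 1 <= X.
    have : 0 <= 2 * E / e by apply: divr_ge0; [apply: mulr_ge0 | apply: ltW].
    rewrite /X; lra.
  have out : forall t x : R, 0 <= t <= T -> X < `|x| -> z t x < 0.
    move=> t x /andP[t0 tT] Xx.
    have a1 : expR (be * t) * u t x <= E * (1 + `|x|).
      have [u0|u0] := leP 0 (u t x).
        apply: (@le_trans _ _ (expR (be * T) * u t x)).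
          by apply: ler_wpM2r => //; rewrite ler_expR ler_pM2l.
        rewrite /E -mulrA; apply: ler_wpM2l; first exact: expR_ge0.
        by apply: ug; rewrite t0 tT.
      have h : expR (be * t) * u t x <= 0 by rewrite pmulr_rle0 ?expR_gt0 // ltW.
      have : 0 <= E * (1 + `|x|) by rewrite mulr_ge0 // addr_ge0.
      lra.
    have a2 : 0 <= F0 * (T - t) by rewrite mulr_ge0 // subr_ge0.
    have a3 : e * (1 + x ^+ 2) <= e * (1 + x ^+ 2) * expR (ka * (T - t)).
      have h1 : 1 <= expR (ka * (T - t)) by apply: expge1; apply: mulr_ge0; rewrite /ka; lra.
      have h2 : 0 <= e * (1 + x ^+ 2).
        by apply: mulr_ge0; [apply: ltW | apply: addr_ge0 => //; apply: sqr_ge0].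
      by rewrite ler_peMr.
    have a4 : E * (1 + `|x|) < e * (1 + x ^+ 2).
      rewrite -(real_normK (num_real _)).
      have n1 : 1 < `|x| by lra.
      have en : 2 * E < e * `|x|.
        have : X * e < `|x| * e by rewrite ltr_pM2r.
        rewrite /X mulrDl mul1r -mulrA mulVf ?gt_eqF // mulr1 mulrC; lra.
      nra.
    rewrite /z; lra.
  pose Kc := [set` `[t1, T]] `*` [set` `[- X, X]].
  have cK : compact Kc by apply: compact_setX; exact: segment_compact.
  have K0 : Kc !=set0.
    exists (t1, 0); split => /=; rewrite in_itv /= ?t1T ?lexx //; lra.
  have KS : Kc `<=` [set p : R * R | 0 <= p.1 <= T].
    move=> [t x] [/= + _]; rewrite in_itv /= => /andP[h1 h2]; apply/andP; split => //; lra.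
  have czK : {within Kc, continuous (fun p => z p.1 p.2)} by exact: (@zcont R Kc _ u be F0 T e ka KS cu).
  have [[ts xs] /set_mem [/= tsK xsK] zmax] := compact_EVT_max K0 cK czK.
  move: tsK xsK; rewrite !in_itv /= => /andP[ts1 tsT] /andP[xs1 xs2].
  have x0K : - X <= x0 <= X.
    rewrite -ler_norml leNgt; apply/negP => Xx.
    have := out t1 x0; rewrite Xx; move=> /(_ _ isT).
    have : 0 <= t1 <= T by apply/andP; split; lra.
    by move=> -> /=; lra.
  have zc : 0 < z ts xs.
    apply: lt_le_trans zpos _; apply: (zmax (t1, x0)).
    by rewrite inE; split; rewrite /= in_itv /= ?lexx ?t1T.
  have tsT' : ts < T.
    rewrite lt_neqAle tsT andbT; apply/negP => /eqP tsE.
    move: zc; rewrite /z tsE subrr !mulr0 expR0 mulr1 subr0.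
    have := uT xs.
    have : 0 < e * (1 + xs ^+ 2).
      by apply: mulr_gt0 => //; apply: ltr_wpDr; [apply: sqr_ge0 | apply: ltr01].
    have := expR_gt0 (be * T); nra.
  have ts0 : 0 < ts by lra.
  have tsI : 0 <= ts <= T by apply/andP; split; lra.
  have xmax : forall y : R, z ts y <= z ts xs.
    move=> y; have [yX|yX] := leP `|y| X.
      apply: (zmax (ts, y)); rewrite inE; split; rewrite /= in_itv /= ?ts1 ?tsT //.
      by rewrite -ler_norml.
    by apply: ltW; apply: lt_trans (out ts y tsI yX) zc.
  set E1 := expR (be * ts). set e2 := expR (ka * (T - ts)).
  have E10 : 0 < E1 by exact: expR_gt0.
  have e20 : 0 < e2 by exact: expR_gt0.
  have gfun : (fun y => z ts y) =
      (fun y => E1 * u ts y - F0 * (T - ts) - (e * e2) * (1 + y ^+ 2)).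
    by apply/funext => y; rewrite /z /E1 /e2; ring.
  have dg : forall y : R, is_derive y 1 (fun y => z ts y)
      (E1 * derive1 (u ts) y - (e * e2) * (2 * y)).
    move=> y; rewrite gfun; apply: dx_g.
    rewrite derive1E; apply/derivableP; exact: (dx ts y tsI).1.
  have d1g : derive1 (fun y => z ts y) = (fun y => E1 * pdx u ts y - (e * e2) * (2 * y)).
    by apply/funext => y; rewrite derive1E (@derive_val _ _ _ _ _ _ _ (dg y)).
  have dg2 : forall y : R, is_derive y 1 (derive1 (fun y => z ts y))
      (E1 * pdxx u ts y - (e * e2) * 2).
    move=> y; rewrite d1g; apply: dx_g2.
    rewrite /pdxx derive1E; apply/derivableP; exact: (dx ts y tsI).2.
  have [gx1 gx2] := max_d2 (fun y => @ex_derive _ _ _ _ _ _ _ (dg y)) (fun y => @ex_derive _ _ _ _ _ _ _ (dg2 y)) xmax.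
  rewrite d1g in gx1.
  have {gx2} gx2 : E1 * pdxx u ts xs - (e * e2) * 2 <= 0.
    by move: gx2; rewrite derive1E (@derive_val _ _ _ _ _ _ _ (dg2 xs)).
  have dh : is_derive ts 1 (fun s => z s xs)
     (be * expR (be * ts) * u ts xs + expR (be * ts) * pdt u ts xs + F0
        + e * (1 + xs ^+ 2) * ka * expR (ka * (T - ts))).
    rewrite /z; apply: dt_z.
    rewrite /pdt derive1E; apply/derivableP; apply: dt; lra.
  have ht : derive1 (fun s => z s xs) ts <= 0.
    apply: (@dq_nonpos _ _ _ (T - ts)); first exact: (@ex_derive _ _ _ _ _ _ _ dh).
      lra.
    move=> h /andP[h0 h1]; apply: (zmax (ts + h, xs)).
    rewrite inE; split; rewrite /= in_itv /=; apply/andP; split; lra.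
  move: ht; rewrite derive1E (@derive_val _ _ _ _ _ _ _ dh) -/E1 -/e2 => ht.
  have upos : 0 < u ts xs.
    move: zc; rewrite /z -/E1 -/e2 => zc.
    have : 0 <= F0 * (T - ts) by rewrite mulr_ge0 // subr_ge0.
    have : 0 < e * (1 + xs ^+ 2) * e2.
      apply: mulr_gt0 => //; apply: mulr_gt0 => //.
      by apply: ltr_wpDr; [apply: sqr_ge0 | apply: ltr01].
    move=> h1 h2; have : 0 < E1 * u ts xs by lra.
    by rewrite pmulr_rgt0.
  have tsI2 : 0 < ts < T by rewrite ts0 tsT'.
  have := pde ts xs tsI2; rewrite gtr0_norm //.
  set U := u ts xs in ht * ; set Pt := pdt u ts xs in ht *; set Px := pdx u ts xs in gx1 *; set Pxx := pdxx u ts xs in gx2 *.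
  set B := b ts xs => hpde.
  have bB := bg ts xs tsI2; rewrite -/B in bB.
  set W := e * e2.
  have W0 : 0 < W by rewrite mulr_gt0.
  set Y := 1 + xs ^+ 2.
  have Y1 : 1 <= Y by rewrite /Y lerDl sqr_ge0.
  have h1 : E1 * Pt <= - (be * (E1 * U)) - F0 - ka * Y * W.
    have -> : ka * Y * W = e * (1 + xs ^+ 2) * ka * e2 by rewrite /W /Y; ring.
    have -> : be * (E1 * U) = be * E1 * U by ring.
    lra.
  have h2 : E1 * (B * Px) = B * (2 * W * xs).
    have : E1 * Px = 2 * W * xs by move: gx1; rewrite /W; lra.
    by move=> <-; ring.
  have h3 : E1 * (a * Pxx) <= 2 * a * W.
    have : E1 * Pxx <= 2 * W by move: gx2; rewrite /W; lra.
    move=> H; have -> : E1 * (a * Pxx) = a * (E1 * Pxx) by ring.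
    have -> : 2 * a * W = a * (2 * W) by ring.
    exact: ler_wpM2l.
  have h4 : B * xs <= 2 * B0 * Y.
    apply: le_trans (ler_norm _) _; rewrite normrM.
    apply: le_trans (ler_wpM2r (normr_ge0 _) bB) _.
    rewrite /Y -(real_normK (num_real xs)).
    have hn : (1 + `|xs|) * `|xs| <= 2 * (1 + `|xs| ^+ 2).
      have := normr_ge0 xs; nra.
    have -> : 2 * B0 * (1 + `|xs| ^+ 2) = B0 * (2 * (1 + `|xs| ^+ 2)) by ring.
    rewrite -mulrA; exact: ler_wpM2l.
  have h5 : E1 * (- c0 * U - f0) <= E1 * Pt + E1 * (B * Px) + E1 * (a * Pxx).
    by rewrite -!mulrDr; apply: ler_wpM2l => //; exact: ltW.
  have h6 : W * (B * xs) <= W * (2 * B0 * Y) by apply: ler_wpM2l => //; exact: ltW.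
  have h7 : a * W <= a * W * Y by rewrite ler_peMr // mulr_ge0 // ltW.
  have h8 : E1 * f0 <= F0.
    by rewrite /F0 ler_wpM2r // ler_expR ler_pM2l.
  have h9 : 0 < E1 * U by rewrite mulr_gt0.
  have h10 : 0 < Y * W by rewrite mulr_gt0 //; lra.
  move: h5; rewrite h2.
  have -> : E1 * (- c0 * U - f0) = - c0 * (E1 * U) - E1 * f0 by ring.
  have -> : B * (2 * W * xs) = 2 * (W * (B * xs)) by ring.
  have q1 : ka * Y * W = 4 * B0 * (Y * W) + 2 * (a * W * Y) + Y * W by rewrite /ka; ring.
  have q2 : W * (2 * B0 * Y) = 2 * B0 * (Y * W) by ring.
  rewrite q1 in h1; rewrite q2 in h6.
  have q3 : be * (E1 * U) = c0 * (E1 * U) + E1 * U by rewrite /be; ring.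
  rewrite q3 in h1; lra.
have stepB : forall t1 x0 : R, 0 < t1 <= T -> u t1 x0 <= T * F0.
  move=> t1 x0 t1I.
  have : expR (be * t1) * u t1 x0 <= F0 * (T - t1).
    apply/ler_addgt0Pr => e e0.
    set c := (1 + x0 ^+ 2) * expR (ka * (T - t1)).
    have c0' : 0 < c.
      apply: mulr_gt0; last exact: expR_gt0.
      by apply: ltr_wpDr; [apply: sqr_ge0 | apply: ltr01].
    have := stepA t1 x0 (e / c) t1I (divr_gt0 e0 c0').
    have -> : e / c * (1 + x0 ^+ 2) * expR (ka * (T - t1)) = e.
      by rewrite -mulrA -/c divfK // gt_eqF.
    lra.
  case/andP: t1I => t10 t1T.
  have [u0|u0] := leP 0 (u t1 x0); last first.
    by move=> _; apply: le_trans (ltW u0) _; rewrite mulr_ge0 // ltW.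
  have := expge1 (be * t1) (mulr_ge0 (ltW be0) (ltW t10)).
  have : F0 * (T - t1) <= T * F0 by rewrite mulrC ler_wpM2r //; lra.
  move=> h1 h2 h3; have : u t1 x0 <= expR (be * t1) * u t1 x0 by rewrite ler_peMl.
  lra.
move=> t x /andP[t0 tT].
rewrite -/be -/F0.
have [->|tpos] := eqVneq t 0; last first.
  apply: stepB; apply/andP; split => //; rewrite lt_neqAle eq_sym tpos //.
apply: (@cl0 _ T _ (fun s => u s x)) => //.
  apply: (@slice_cont _ [set p : R * R | 0 <= p.1 <= T]) => //.
by move=> s sI; apply: stepB.
Qed.


Lemma d1N (R : realType) (f : R -> R) x : derivable f x 1 ->
  derivable (fun z => - f z) x 1 /\ derive1 (fun z => - f z) x = - derive1 f x.
Proof.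
move=> df; have -> : (fun z => - f z) = - f by [].
split; first exact: derivableN.
by rewrite !derive1E deriveN.
Qed.

Lemma d1B (R : realType) (f g : R -> R) x : derivable f x 1 -> derivable g x 1 ->
  derivable (fun z => f z - g z) x 1 /\
  derive1 (fun z => f z - g z) x = derive1 f x - derive1 g x.
Proof.
move=> df dg; have -> : (fun z => f z - g z) = f - g by [].
split; first exact: derivableB.
by rewrite !derive1E deriveB.
Qed.

Lemma wcB (R : realType) (T : topologicalType) (A : set T) (f g : T -> R) :
  {within A, continuous f} -> {within A, continuous g} ->
  {within A, continuous (fun p => f p - g p)}.
Proof.
move=> /subspace_continuousP cf /subspace_continuousP cg.
apply/subspace_continuousP => x Ax; exact: cvgB (cf x Ax) (cg x Ax).
Qed.

Lemma wcN (R : realType) (T : topologicalType) (A : set T) (f : T -> R) :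
  {within A, continuous f} -> {within A, continuous (fun p => - f p)}.
Proof.
move=> /subspace_continuousP cf.
apply/subspace_continuousP => x Ax; exact: cvgN (cf x Ax).
Qed.

Lemma absle_lo (R : realType) (Q c U f : R) : `|Q| <= c * U + f -> - c * U - f <= Q.
Proof. move=> H; have := ler_norm (- Q); rewrite normrN; lra. Qed.

Lemma maxp2 (R : realType) (T : R) (u b : R -> R -> R) (a c0 f0 K1 B0 : R) :
  0 < T -> 0 <= a -> 0 <= c0 -> 0 <= f0 -> 0 <= K1 -> 0 <= B0 ->
  (forall t x, 0 <= t <= T -> derivable (u t) x 1 /\ derivable (fun z => pdx u t z) x 1) ->
  (forall t x, 0 < t < T -> derivable (fun s => u s x) t 1) ->
  {within [set p : R * R | 0 <= p.1 <= T], continuous (fun p => u p.1 p.2)} ->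
  (forall t x, 0 <= t <= T -> `|u t x| <= K1 * (1 + `|x|)) ->
  (forall t x, 0 < t < T -> `|b t x| <= B0 * (1 + `|x|)) ->
  (forall x, u T x = 0) ->
  (forall t x, 0 < t < T ->
     `|pdt u t x + b t x * pdx u t x + a * pdxx u t x| <= c0 * `|u t x| + f0) ->
  forall t x, 0 <= t <= T -> `|u t x| <= T * (expR ((c0 + 1) * T) * f0).
Proof.
move=> T0 a0 c00 f00 K10 B00 dx dt cu ug bg uT pde t x tI.
have ug1 : forall s y, 0 <= s <= T -> u s y <= K1 * (1 + `|y|).
  by move=> s y sI; apply: le_trans (ler_norm _) (ug s y sI).
have uT1 : forall y, u T y <= 0 by move=> y; rewrite uT.
have pde1 : forall s y, 0 < s < T ->
    - c0 * `|u s y| - f0 <= pdt u s y + b s y * pdx u s y + a * pdxx u s y.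
  by move=> s y sI; apply: absle_lo; exact: pde.
have up := @maxp R T u b a c0 f0 K1 B0 T0 a0 c00 f00 K10 B00 dx dt cu ug1 bg uT1 pde1 t x tI.
pose v t x := - u t x.
have hv : forall s y, `|v s y| = `|u s y| by move=> s y; rewrite normrN.
have dxv : forall s y, 0 <= s <= T -> pdx v s y = - pdx u s y.
  by move=> s y sI; rewrite /pdx /v (d1N (dx s y sI).1).2.
have dxv' : forall s, 0 <= s <= T -> (fun z => pdx v s z) = (fun z => - pdx u s z).
  by move=> s sI; apply/funext => z; exact: dxv.
have dxxv : forall s y, 0 <= s <= T -> pdxx v s y = - pdxx u s y.
  move=> s y sI; rewrite /pdxx.
  have -> : (fun z => derive1 (v s) z) = (fun z => - pdx u s z) by exact: dxv'.
  exact: (d1N (dx s y sI).2).2.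
have dtv : forall s y, 0 < s < T -> pdt v s y = - pdt u s y.
  by move=> s y sI; rewrite /pdt /v (d1N (dt s y sI)).2.
have dxv2 : forall s y, 0 <= s <= T -> derivable (v s) y 1 /\ derivable (fun z => pdx v s z) y 1.
  move=> s y sI; split; first exact: (d1N (dx s y sI).1).1.
  by rewrite (dxv' s sI); exact: (d1N (dx s y sI).2).1.
have dtv2 : forall s y, 0 < s < T -> derivable (fun r => v r y) s 1.
  by move=> s y sI; exact: (d1N (dt s y sI)).1.
have cv : {within [set p : R * R | 0 <= p.1 <= T], continuous (fun p => v p.1 p.2)}.
  exact: (wcN cu).
have ugv : forall s y, 0 <= s <= T -> v s y <= K1 * (1 + `|y|).
  by move=> s y sI; apply: le_trans (ler_norm _) _; rewrite hv; exact: ug.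
have uTv : forall y, v T y <= 0 by move=> y; rewrite /v uT oppr0.
have pdev : forall s y, 0 < s < T ->
    - c0 * `|v s y| - f0 <= pdt v s y + b s y * pdx v s y + a * pdxx v s y.
  move=> s y sI.
  have sI' : 0 <= s <= T by case/andP: sI => h1 h2; rewrite !ltW.
  rewrite dtv // dxv // dxxv // hv.
  have -> : - pdt u s y + b s y * - pdx u s y + a * - pdxx u s y =
     - (pdt u s y + b s y * pdx u s y + a * pdxx u s y) by ring.
  apply: absle_lo; rewrite normrN; exact: pde.
have vp := @maxp R T v b a c0 f0 K1 B0 T0 a0 c00 f00 K10 B00 dxv2 dtv2 cv ugv bg uTv pdev t x tI.
apply/ler_normlP; split => //.
Qed.


Lemma growth (R : realType) (T M : R) (F : R -> R -> R) : 0 <= T ->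
  {within [set p : R * R | 0 <= p.1 <= T], continuous (fun p => F p.1 p.2)} ->
  (forall t x, 0 <= t <= T -> derivable (F t) x 1) ->
  (forall t x, 0 <= t <= T -> `|pdx F t x| <= M) ->
  exists Fm, 0 <= Fm /\ forall t x, 0 <= t <= T -> `|F t x| <= Fm + M * `|x|.
Proof.
move=> T0 cF dF bF.
have c0 : {within `[0, T], continuous (fun t => F t 0)}.
  apply: (@slice_cont _ [set p : R * R | 0 <= p.1 <= T]) => //.
have [c1 c1I H1] := EVT_max T0 c0.
have [c2 c2I H2] := EVT_min T0 c0.
exists (`|F c1 0| + `|F c2 0|); split; first by rewrite addr_ge0.
move=> t x tI.
have tI' : t \in `[0, T] by rewrite in_itv.
have h1 := H1 t tI'; have h2 := H2 t tI'.
have h0 : `|F t 0| <= `|F c1 0| + `|F c2 0|.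
  apply/ler_normlP; split.
    have := ler_norm (- F c2 0); rewrite normrN.
    have := normr_ge0 (F c1 0); lra.
  have := ler_norm (F c1 0); have := normr_ge0 (F c2 0); lra.
have hl := lipf (fun y => dF t y tI) (fun y => bF t y tI) 0 x.
rewrite subr0 in hl.
have := ler_normB (F t x) (F t 0).
have := ler_distD (F t 0) (F t x) 0.
move=> _.
have e : `|F t x| <= `|F t x - F t 0| + `|F t 0|.
  by rewrite -{1}(subrK (F t 0) (F t x)) ler_normD.
lra.
Qed.

Lemma alg (R : realType) (pt1 px1 pxx1 f1 k1 b1 pt2 px2 pxx2 f2 k2 b2 A B ax x Pt W s2 th q a' : R) :
  pt1 + px1 * (A * x + ax + B * k1 + b1) + Pt * (ax + W + B * k1 + b1 + a' * x)
    + 2^-1 * (0 + s2) * pxx1 + q + (A + a') * f1 = 0 ->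
  pt2 + px2 * (A * x + ax + B * k2 + b2) + Pt * (ax + W + B * k2 + b2 + a' * x)
    + 2^-1 * (th + s2) * pxx2 + q + (A + a') * f2 = 0 ->
  (pt1 - pt2) + (A * x + ax + B * k2 + b2) * (px1 - px2) + 2^-1 * (th + s2) * (pxx1 - pxx2)
  = - px1 * (B * (k1 - k2) + (b1 - b2)) - Pt * (B * (k1 - k2) + (b1 - b2))
    + 2^-1 * th * pxx1 - (A + a') * (f1 - f2).
Proof.
move=> e1 e2.
apply/eqP; rewrite -subr_eq0; apply/eqP.
transitivity ((pt1 + px1 * (A * x + ax + B * k1 + b1) + Pt * (ax + W + B * k1 + b1 + a' * x)
    + 2^-1 * (0 + s2) * pxx1 + q + (A + a') * f1) -
  (pt2 + px2 * (A * x + ax + B * k2 + b2) + Pt * (ax + W + B * k2 + b2 + a' * x)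
    + 2^-1 * (th + s2) * pxx2 + q + (A + a') * f2)); first ring.
by rewrite e1 e2 subrr.
Qed.

Lemma bnd (R : realType) (px1 Pt pxx1 k1 k2 b1 b2 g A B th M Pm Lr Lb Aa : R) :
  0 <= th -> `|px1| <= M -> `|Pt| <= Pm -> `|pxx1| <= M ->
  `|k1 - k2| <= Lr * `|g| -> `|b1 - b2| <= Lb * `|k1 - k2| -> `|A| <= Aa ->
  0 <= Lb ->
  `|- px1 * (B * (k1 - k2) + (b1 - b2)) - Pt * (B * (k1 - k2) + (b1 - b2))
    + 2^-1 * th * pxx1 - A * g|
  <= (M * (`|B| + Lb) * Lr + Pm * (`|B| + Lb) * Lr + Aa) * `|g| + 2^-1 * th * M.
Proof.
move=> th0 h1 h2 h3 hk hb hA Lb0.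
set D := B * (k1 - k2) + (b1 - b2).
have hD : `|D| <= (`|B| + Lb) * Lr * `|g|.
  have e0 := ler_normD (B * (k1 - k2)) (b1 - b2); rewrite normrM in e0.
  have e1 := ler_wpM2l (normr_ge0 B) hk.
  have e2 := ler_wpM2l Lb0 hk.
  have -> : (`|B| + Lb) * Lr * `|g| = `|B| * (Lr * `|g|) + Lb * (Lr * `|g|) by ring.
  rewrite /D; lra.
have n0 := normr_ge0 D.
have t1 : `|- px1 * D| <= M * ((`|B| + Lb) * Lr * `|g|).
  by rewrite normrM normrN; apply: ler_pM.
have t2 : `|Pt * D| <= Pm * ((`|B| + Lb) * Lr * `|g|).
  by rewrite normrM; apply: ler_pM.
have t3 : `|2^-1 * th * pxx1| <= 2^-1 * th * M.
  rewrite normrM ger0_norm; last by rewrite mulr_ge0.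
  by apply: ler_wpM2l => //; rewrite mulr_ge0.
have t4 : `|A * g| <= Aa * `|g|.
  by rewrite normrM; apply: ler_wpM2r.
have := ler_normD (- px1 * D - Pt * D + 2^-1 * th * pxx1) (- (A * g)).
have := ler_normD (- px1 * D - Pt * D) (2^-1 * th * pxx1).
have := ler_normD (- px1 * D) (- (Pt * D)).
rewrite !normrN.
have -> : (M * (`|B| + Lb) * Lr + Pm * (`|B| + Lb) * Lr + Aa) * `|g| =
  M * ((`|B| + Lb) * Lr * `|g|) + Pm * ((`|B| + Lb) * Lr * `|g|) + Aa * `|g| by ring.
lra.
Qed.


Lemma bbound (R : realType) (A B x fax rhoy bty r0 Lr Py Psy Ma0 Mb0 Pm Psm MPsi : R) :
  `|fax| <= Ma0 -> `|bty| <= Mb0 -> `|rhoy - r0| <= Lr * `|Py + Psy - 0| ->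
  `|Py| <= Pm * `|x| -> `|Psy| <= Psm + MPsi * `|x| -> 0 <= Lr -> 0 <= Pm ->
  0 <= Psm -> 0 <= MPsi ->
  `|A * x + fax + B * rhoy + bty| <=
    (`|A| + Ma0 + `|B| * (`|r0| + Lr * (Pm + Psm + MPsi)) + Mb0) * (1 + `|x|).
Proof.
move=> h1 h2 h3 h4 h5 L0 P0 S0 M0.
rewrite subr0 in h3.
have n1 : `|A * x + fax + B * rhoy + bty| <= `|A| * `|x| + `|fax| + `|B| * `|rhoy| + `|bty|.
  rewrite -!normrM; apply: le_trans (ler_normD _ _) _; rewrite lerD2r.
  apply: le_trans (ler_normD _ _) _; rewrite lerD2r.
  exact: ler_normD.
have n2 : `|rhoy| <= `|r0| + Lr * (Pm * `|x| + (Psm + MPsi * `|x|)).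
  have e1 : `|rhoy| <= `|rhoy - r0| + `|r0|.
    by rewrite -{1}(subrK r0 rhoy) ler_normD.
  have e2 : `|Py + Psy| <= Pm * `|x| + (Psm + MPsi * `|x|).
    apply: le_trans (ler_normD _ _) _; exact: lerD.
  have e3 := ler_wpM2l L0 e2.
  lra.
have n3 := ler_wpM2l (normr_ge0 B) n2.
have nx := normr_ge0 x.
have nB := normr_ge0 B.
have nA := normr_ge0 A.
have n0 := normr_ge0 r0.
have -> : (`|A| + Ma0 + `|B| * (`|r0| + Lr * (Pm + Psm + MPsi)) + Mb0) * (1 + `|x|) =
  `|A| * `|x| + Ma0 + `|B| * (`|r0| + Lr * (Pm * `|x| + (Psm + MPsi * `|x|))) + Mb0
  + (`|A| + (Ma0 + Mb0 + `|B| * `|r0| + `|B| * Lr * Psm) * `|x|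
     + `|B| * Lr * (Pm + MPsi)) by ring.
have z1 : 0 <= Ma0 by apply: le_trans h1.
have z2 : 0 <= Mb0 by apply: le_trans h2.
have z3 : 0 <= `|A| + (Ma0 + Mb0 + `|B| * `|r0| + `|B| * Lr * Psm) * `|x|
     + `|B| * Lr * (Pm + MPsi).
  apply: addr_ge0; [apply: addr_ge0 => //; apply: mulr_ge0 => // | ].
    by apply: addr_ge0; [apply: addr_ge0; [lra | apply: mulr_ge0] | apply: mulr_ge0; [apply: mulr_ge0|]].
  by apply: mulr_ge0; [apply: mulr_ge0 | lra].
lra.
Qed.

Unset Implicit Arguments.

Theorem mainTheorem15 (R : realType) (D : lq_data R)
    (P rho : R -> R) (Phi : R -> R -> R) (mu : probability R R) :
  hypA1 D -> hypA3 D -> is_rho D rho -> is_riccati D P -> hypA4 D P ->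
  pde_sol D P rho 0 Phi ->
  (\int[mu]_x (x ^+ 2)%:E < +oo)%E ->
  exists K : R, forall (N : nat), (0 < N)%N ->
  forall Psi : R -> R -> R, pde_sol D P rho (sig D ^+ 2 / N%:R) Psi ->
  forall (d : measure_display) (Omega : measurableType d) (Pr : probability Omega R)
    (xi : 'I_N -> Omega -> R) (W0 : R -> Omega -> R) (W : 'I_N -> R -> Omega -> R)
    (xbar : 'I_N -> R -> Omega -> R),
  measure_is_complete Pr ->
  (forall i, measurable_fun setT (xi i)) ->
  (forall i (B : set R), measurable B -> Pr (xi i @^-1` B) = mu B) ->
  is_BM Pr (hT D) W0 -> (forall i, is_BM Pr (hT D) (W i)) ->
  lp_indep Pr (hT D) xi W0 W ->
  solves_LP Pr D P rho Psi xi W0 W xbar ->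
  forall i : 'I_N,
    (\int[Pr]_w
       sup_on (hT D) (fun t =>
         `| feedback D P rho Phi t (xbar i t w) (emp_mean (fun j u => xbar j u w) t)
          - feedback D P rho Psi t (xbar i t w) (emp_mean (fun j u => xbar j u w) t) | ^+ 2)%R
     <= (K / N%:R ^+ 2)%R%:E)%E.
Proof.
move=> A1 _ Hrho Hric _ Hphi _.
case: A1 => T0 [_ [_ [_ [s0 [s00 [Rpos [ba [bb _]]]]]]]].
case: ba => da [_ [_ [[Ma0 Ha0] [[Ma1 Ha1] _]]]].
case: bb => db [_ [_ [[Mb0 Hb0] [[Mb1 Hb1] _]]]].
case: Hrho => drho _ [Lr HLr] _.
case: Hric => Pc _ Pnn _.
case: Hphi => dPhi [dtPhi [cPhi [_ [_ [_ [[MPhi HMPhi] [ePhi tPhi]]]]]]].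
set T := hT D.
have [cP cPI HP] := EVT_max (ltW T0) Pc.
set Pm := P cP.
have Pb : forall t, 0 <= t <= T -> `|P t| <= Pm.
  move=> t tI; rewrite ger0_norm; last exact: Pnn.
  by apply: HP; rewrite in_itv.
have Lr0 : 0 <= Lr by apply: le_trans (HLr 0).
have Mb10 : 0 <= Mb1 by apply: le_trans (Hb1 0).
have Ma10 : 0 <= Ma1 by apply: le_trans (Ha1 0).
have I0 : 0 <= (0:R) <= T by rewrite lexx ltW.
have MPhi0 : 0 <= MPhi by have [h _] := HMPhi 0 0 I0; apply: le_trans h.
have Pm0 : 0 <= Pm by apply: le_trans (Pb 0 I0).
set c0 := MPhi * (`|cB D| + Mb1) * Lr + Pm * (`|cB D| + Mb1) * Lr + (`|cA D| + Ma1).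
have c00 : 0 <= c0.
  rewrite /c0; apply: addr_ge0; [apply: addr_ge0 |]; rewrite ?mulr_ge0 ?addr_ge0 //.
set C0 := T * expR ((c0 + 1) * T) * 2^-1 * sig D ^+ 2 * MPhi.
exists ((Lr * C0) ^+ 2) => N N0 Psi HPsi d Omega Pr xi W0 W xbar _ _ _ _ _ _ _ i.
have N0' : (N%:R : R) != 0 by rewrite pnatr_eq0 -lt0n.
have Npos : (0 : R) < N%:R by rewrite ltr0n.
have th0 : 0 <= sig D ^+ 2 / N%:R by rewrite divr_ge0 ?sqr_ge0 ?ler0n.
case: HPsi => dPsi [dtPsi [cPsi [_ [_ [_ [[MPsi HMPsi] [ePsi tPsi]]]]]]].
have MPsi0 : 0 <= MPsi by have [h _] := HMPsi 0 0 I0; apply: le_trans h.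
have [Phm [Phm0 gPhi]] := growth (ltW T0) cPhi (fun t x tI => (dPhi t x tI).1)
   (fun t x tI => (HMPhi t x tI).1).
have [Psm [Psm0 gPsi]] := growth (ltW T0) cPsi (fun t x tI => (dPsi t x tI).1)
   (fun t x tI => (HMPsi t x tI).1).
pose u t x := Phi t x - Psi t x.
have dxu : forall t x, 0 <= t <= T -> pdx u t x = pdx Phi t x - pdx Psi t x.
  by move=> t x tI; exact: (d1B (dPhi t x tI).1 (dPsi t x tI).1).2.
have dxu' : forall t, 0 <= t <= T ->
    (fun z => pdx u t z) = (fun z => pdx Phi t z - pdx Psi t z).
  by move=> t tI; apply/funext => z; exact: dxu.
have dxxu : forall t x, 0 <= t <= T -> pdxx u t x = pdxx Phi t x - pdxx Psi t x.
  move=> t x tI; rewrite /pdxx.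
  have -> : (fun z => derive1 (u t) z) = (fun z => pdx Phi t z - pdx Psi t z) by exact: dxu'.
  exact: (d1B (dPhi t x tI).2 (dPsi t x tI).2).2.
have dtu : forall t x, 0 < t < T -> pdt u t x = pdt Phi t x - pdt Psi t x.
  by move=> t x tI; exact: (d1B (dtPhi t x tI) (dtPsi t x tI)).2.
have key := @maxp2 R T u
  (fun t x => cA D * x + fa D x + cB D * kfun P rho t x (Psi t x) + btilde D P rho t x (Psi t x))
  (2^-1 * (sig D ^+ 2 / N%:R + sig0 D ^+ 2)) c0 (2^-1 * (sig D ^+ 2 / N%:R) * MPhi)
  (Phm + Psm + MPhi + MPsi)
  (`|cA D| + Ma0 + `|cB D| * (`|rho 0| + Lr * (Pm + Psm + MPsi)) + Mb0) T0.
have Ma00 : 0 <= Ma0 by apply: le_trans (Ha0 0).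
have Mb00 : 0 <= Mb0 by apply: le_trans (Hb0 0).
have h1 : 0 <= 2^-1 * (sig D ^+ 2 / N%:R + sig0 D ^+ 2).
  by rewrite mulr_ge0 // addr_ge0 // sqr_ge0.
have h2 : 0 <= 2^-1 * (sig D ^+ 2 / N%:R) * MPhi by rewrite !mulr_ge0.
have h3 : 0 <= Phm + Psm + MPhi + MPsi by rewrite !addr_ge0.
have h4 : 0 <= `|cA D| + Ma0 + `|cB D| * (`|rho 0| + Lr * (Pm + Psm + MPsi)) + Mb0.
  by rewrite !addr_ge0 // mulr_ge0 // addr_ge0 // mulr_ge0 // !addr_ge0.
have h5 : forall t x, 0 <= t <= T ->
    derivable (u t) x 1 /\ derivable (fun z => pdx u t z) x 1.
  move=> t x tI; split; first exact: (d1B (dPhi t x tI).1 (dPsi t x tI).1).1.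
  rewrite (dxu' t tI); exact: (d1B (dPhi t x tI).2 (dPsi t x tI).2).1.
have h6 : forall t x, 0 < t < T -> derivable (fun s => u s x) t 1.
  by move=> t x tI; exact: (d1B (dtPhi t x tI) (dtPsi t x tI)).1.
have h7 : {within [set p : R * R | 0 <= p.1 <= T], continuous (fun p => u p.1 p.2)}.
  exact: (wcB cPhi cPsi).
have h8 : forall t x, 0 <= t <= T -> `|u t x| <= (Phm + Psm + MPhi + MPsi) * (1 + `|x|).
  move=> t x tI; have := gPhi t x tI; have := gPsi t x tI.
  have := ler_normB (Phi t x) (Psi t x); rewrite /u.
  have nx := normr_ge0 x.
  rewrite mulrDr mulr1 !mulrDl.
  have : 0 <= Phm * `|x| by rewrite mulr_ge0.
  have : 0 <= Psm * `|x| by rewrite mulr_ge0.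
  lra.
have h9 : forall t x, 0 < t < T ->
    `|cA D * x + fa D x + cB D * kfun P rho t x (Psi t x) + btilde D P rho t x (Psi t x)|
    <= (`|cA D| + Ma0 + `|cB D| * (`|rho 0| + Lr * (Pm + Psm + MPsi)) + Mb0) * (1 + `|x|).
  move=> t x tI.
  have tI' : 0 <= t <= T by case/andP: tI => a1 a2; rewrite !ltW.
  apply: (@bbound R (cA D) (cB D) x (fa D x) (rho (P t * x + Psi t x))
     (fb D (rho (P t * x + Psi t x))) (rho 0) Lr (P t * x) (Psi t x)) => //.
  - exact: lipf drho HLr 0 (P t * x + Psi t x).
  - by rewrite normrM; apply: ler_wpM2r => //; exact: Pb.
  - exact: gPsi.
have h10 : forall x, u T x = 0 by move=> x; rewrite /u tPhi tPsi subrr.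
have h11 : forall t x, 0 < t < T ->
    `|pdt u t x + (cA D * x + fa D x + cB D * kfun P rho t x (Psi t x)
        + btilde D P rho t x (Psi t x)) * pdx u t x
      + 2^-1 * (sig D ^+ 2 / N%:R + sig0 D ^+ 2) * pdxx u t x|
    <= c0 * `|u t x| + 2^-1 * (sig D ^+ 2 / N%:R) * MPhi.
  move=> t x tI.
  have tI' : 0 <= t <= T by case/andP: tI => a1 a2; rewrite !ltW.
  rewrite dtu // dxu // dxxu //.
  rewrite (alg (ePhi t x tI) (ePsi t x tI)).
  apply: bnd => //.
  - exact: (HMPhi t x tI').1.
  - exact: Pb.
  - exact: (HMPhi t x tI').2.
  - have := lipf drho HLr (P t * x + Psi t x) (P t * x + Phi t x).
    by rewrite /kfun /u; have -> : P t * x + Phi t x - (P t * x + Psi t x) = Phi t x - Psi t x by ring.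
  - exact: (lipf db Hb1 (kfun P rho t x (Psi t x)) (kfun P rho t x (Phi t x))).
  - apply: le_trans (ler_normD _ _) _; rewrite lerD2l; exact: Ha1.
have kb : forall t x, 0 <= t <= T -> `|u t x| <= C0 / N%:R.
  move=> t x tI; have := key h1 c00 h2 h3 h4 h5 h6 h7 h8 h9 h10 h11 t x tI.
  have -> : T * (expR ((c0 + 1) * T) * (2^-1 * (sig D ^+ 2 / N%:R) * MPhi)) = C0 / N%:R.
    by rewrite /C0; field.
  done.
apply: int_le_cst.
  by apply: divr_ge0; [apply: sqr_ge0 | apply: exprn_ge0; apply: ler0n].
move=> w.
set m := emp_mean (fun j u0 => xbar j u0 w).
have fb' : forall t, 0 <= t <= T ->
    `|feedback D P rho Phi t (xbar i t w) (m t) - feedback D P rho Psi t (xbar i t w) (m t)| ^+ 2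
    <= (Lr * C0) ^+ 2 / N%:R ^+ 2.
  move=> t tI.
  have -> : feedback D P rho Phi t (xbar i t w) (m t) - feedback D P rho Psi t (xbar i t w) (m t)
     = rho (P t * m t + Phi t (m t)) - rho (P t * m t + Psi t (m t)).
    by rewrite /feedback /kfun; ring.
  have e1 := lipf drho HLr (P t * m t + Psi t (m t)) (P t * m t + Phi t (m t)).
  have e0 : P t * m t + Phi t (m t) - (P t * m t + Psi t (m t)) = u t (m t) by rewrite /u; ring.
  rewrite e0 in e1.
  have e2 := le_trans e1 (ler_wpM2l Lr0 (kb t (m t) tI)).
  have e3 := e2; rewrite [X in _ <= X]mulrA in e3.
  rewrite -expr_div_n !expr2.
  by apply: ler_pM; [exact: normr_ge0 | exact: normr_ge0 | exact: e3 | exact: e3].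
apply/andP; split.
  apply: le_trans (ereal_sup_ubound _); last first.
    exists 0; first by rewrite /= in_itv /= lexx ltW.
    reflexivity.
  by rewrite lee_fin sqr_ge0.
apply: ge_ereal_sup => _ [t tI <-]; rewrite lee_fin; apply: fb'.
by move: tI; rewrite /= in_itv.
Qed.
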